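(* Let $(\bar\alpha,\bar\beta)$ be a strict shifted pair of partitions and put $M=l(\bar\alpha)-l(\bar\beta)$. Define $g_1=0$ and, for $2\le i\le l(\bar\alpha)$, $g_i=(i-2)-\#\{j:\ \bar\beta_j\ge\bar\alpha_i\}$. Then every integer $t$ with $0\le t\le M-2$ occurs as some $g_i$, and setting $s_t=\min\{\bar\alpha_i:\ g_i=t\}$ we have $s_0\ge s_1\ge\cdots\ge s_{M-2}$.
   Context: A partition is a finite nonincreasing sequence of positive integers (possibly empty); $l(\lambda)$ is its number of parts. A pair of partitions $(\alpha,\beta)$ is strict shifted if $l(\alpha)>l(\beta)$ and $\alpha_{i+1}>\beta_i$ for $1\le i\le l(\beta)$. *)

(* Defs.v *)
From mathcomp Require Import all_boot all_order all_algebra.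
Set Implicit Arguments. Unset Strict Implicit. Unset Printing Implicit Defensive.
Import GRing.Theory Num.Theory.
Local Open Scope ring_scope.
Local Open Scope nat_scope.

Definition is_partition (s : seq nat) : bool :=
  sorted geq s && all (fun x => (0 < x)%N) s.

(* 1-indexed part lambda_i (0 outside the range 1..l(lambda)). *)
Definition part (s : seq nat) (i : nat) : nat := nth 0 s i.-1.

Definition strict_shifted (a b : seq nat) : bool :=
  ((size b < size a)%N) &&
  all (fun i => (part b i < part a i.+1)%N) (iota 1 (size b)).

Definition gval (a b : seq nat) (i : nat) : int :=
  if i == 1 then 0%R
  else (Posz (i - 2) - Posz (count (fun x => leq (part a i) x) b))%R.

Definition minseq (l : seq nat) : nat := foldr minn (head 0 l) l.

Definition s_seq (a b : seq nat) (t : nat) : nat :=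
  minseq [seq part a i | i <- iota 1 (size a) & gval a b i == Posz t].

(* Main.v *)
Require Import Defs.
From mathcomp Require Import all_boot all_order all_algebra.
Import Order.TTheory GRing.Theory Num.Theory.

Lemma part_mono (a : seq nat) i j : is_partition a -> (1 <= i <= j)%N ->
  (part a j <= part a i)%N.
Proof.
move=> /andP[Hs _] /andP[Hi Hij]; rewrite /part.
case: (ltnP j.-1 (size a)) => Hj; last by rewrite nth_default.
have Hi' : (i.-1 < size a)%N.
  apply: leq_ltn_trans Hj; by rewrite -!subn1 leq_sub2r.
have := @sorted_leq_nth nat geq _ _ 0 a Hs i.-1 j.-1 Hi' Hj.
apply.
- by move=> x y z /= Hyx Hzy; apply: leq_trans Hzy Hyx.
- by move=> x /=.
- by rewrite -!subn1 leq_sub2r.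
Qed.

Lemma step (a b : seq nat) i : is_partition a -> (1 <= i)%N ->
  (gval a b i.+1 <= gval a b i + 1)%R.
Proof.
move=> Ha Hi; rewrite /gval /=.
case: (eqVneq i 1) => [->|Hne] /=.
  by rewrite subnn sub0r add0r (le_trans _ ler01) // oppr_le0.
have Hi2 : (2 <= i)%N by rewrite ltn_neqAle eq_sym Hne Hi.
rewrite eqSS (negbTE (lt0n_neq0 Hi)) (subSn Hi2) -[(i-2).+1]addn1 PoszD [X in (_ <= X)%R]addrAC lerD2l lerN2 lez_nat.
apply: sub_count => x /= Hx; apply: leq_trans Hx.
by apply: part_mono => //; rewrite Hi leqnSn.
Qed.

Lemma ivt (f : nat -> int) p t k :
  (forall i, (p <= i)%N -> (i < p + k)%N -> (f i.+1 <= f i + 1)%R) ->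
  (f p <= t)%R -> (t <= f (p + k)%N)%R ->
  exists2 q, (p <= q <= p + k)%N & f q = t.
Proof.
elim: k => [|k IH] Hs Hp HL.
  exists p; first by rewrite addn0 leqnn.
  by apply/eqP; rewrite eq_le Hp; rewrite addn0 in HL.
case: (eqVneq (f (p + k.+1)%N) t) => [Heq|Hne].
  by exists (p + k.+1)%N => //; rewrite leqnn leq_addr.
have Hlt : (t < f (p + k.+1)%N)%R by rewrite lt_neqAle eq_sym Hne HL.
have Hk : (t <= f (p + k)%N)%R.
  rewrite -ltzD1; apply: lt_le_trans Hlt _; rewrite addnS.
  by apply: Hs; rewrite ?leq_addr // addnS.
have Hs' : forall i, (p <= i)%N -> (i < p + k)%N -> (f i.+1 <= f i + 1)%R.
  by move=> i H1 H2; apply: Hs H1 _; rewrite addnS ltnS ltnW.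
have [q /andP[H1 H2] Hq] := IH Hs' Hp Hk.
by exists q => //; rewrite H1 (leq_trans H2) // leq_add2l.
Qed.

Lemma foldr_min_le d (l : seq nat) x : x \in l -> (foldr minn d l <= x)%N.
Proof.
elim: l => //= y l IH; rewrite in_cons => /orP[/eqP->|H].
  by rewrite geq_minl.
by rewrite geq_min IH ?orbT.
Qed.

Lemma foldr_min_in d (l : seq nat) : foldr minn d l \in d :: l.
Proof.
elim: l => [|y l IH] /=; first by rewrite mem_seq1.
rewrite /minn; case: ltnP => _; first by rewrite !in_cons eqxx orbT.
move: IH; rewrite !in_cons => /orP[->|->] //; by rewrite !orbT.
Qed.

Lemma minseq_in (l : seq nat) : l != [::] -> minseq l \in l.
Proof.
case: l => // x l _; rewrite /minseq /=.
have := foldr_min_in x (x :: l); rewrite /= in_cons => /orP[/eqP->|]//.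
by rewrite in_cons eqxx.
Qed.

From Stdlib Require Import Lia.
Lemma gval_L (a b : seq nat) t : (t + 2 <= size a - size b)%N ->
  (Posz t <= gval a b (size a))%R.
Proof.
move=> H.
have HL : (2 <= size a)%N by move/ssrnat.leP: H => H; apply/ssrnat.leP; rewrite -?minusE -?plusE in H; lia.
have H' : (t + size b <= size a - 2)%N.
  by move/ssrnat.leP: H => H; apply/ssrnat.leP; rewrite -?minusE -?plusE in H *; lia.
rewrite /gval; case: eqP => [E|_]; first by rewrite E in HL.
rewrite lerBrDr -PoszD lez_nat.
by apply: leq_trans H'; rewrite leq_add2l count_size.
Qed.

Theorem mainTheorem6 (a b : seq nat) :
  is_partition a -> is_partition b -> strict_shifted a b ->
  (forall t : nat, (t + 2 <= size a - size b)%N ->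
     exists2 i, (1 <= i <= size a)%N & gval a b i = Posz t) /\
  (forall t1 t2 : nat, (t1 <= t2)%N -> (t2 + 2 <= size a - size b)%N ->
     (s_seq a b t2 <= s_seq a b t1)%N).
Proof.
move=> Ha _ _.
have Hstep : forall p k, (1 <= p)%N -> forall i, (p <= i)%N -> (i < p + k)%N ->
   (gval a b i.+1 <= gval a b i + 1)%R.
  by move=> p k Hp i Hi _; apply: step => //; apply: leq_trans Hi.
have HL2 : forall t, (t + 2 <= size a - size b)%N -> (1 <= size a)%N.
  move=> t H; apply: leq_trans (leq_trans H (leq_subr _ _)).
  by rewrite addn2.
have P1 : forall t p, (1 <= p <= size a)%N -> (gval a b p <= Posz t)%R ->
    (t + 2 <= size a - size b)%N ->
    exists2 q, (p <= q <= size a)%N & gval a b q = Posz t.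
  move=> t p /andP[Hp HpL] Hg H.
  have := @ivt (gval a b) p t (size a - p)%N (Hstep p _ Hp) Hg.
  have E : (p + (size a - p))%N = size a := subnKC HpL.
  rewrite E.
  by apply; apply: gval_L.
have E1 : forall t, (t + 2 <= size a - size b)%N ->
     exists2 i, (1 <= i <= size a)%N & gval a b i = Posz t.
  move=> t H.
  have A1 : (1 <= 1 <= size a)%N by rewrite leqnn (HL2 t H).
  have A2 : (gval a b 1 <= Posz t)%R by rewrite /gval /=.
  have [q /andP[H1 H2] Hq] := P1 t 1%N A1 A2 H.
  by exists q => //; rewrite H1 H2.
split => // t1 t2 Ht Ht2.
have Ht1 : (t1 + 2 <= size a - size b)%N by apply: leq_trans Ht2; rewrite leq_add2r.
have [i Hi Hgi] := E1 t1 Ht1.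
set l := [seq part a i | i <- iota 1 (size a) & gval a b i == Posz t1].
have Hne : l != [::].
  have : part a i \in l.
    by rewrite map_f // mem_filter Hgi eqxx mem_iota add1n ltnS.
  by case: (l).
have := minseq_in l Hne; rewrite /s_seq -/l => /mapP[p].
rewrite mem_filter mem_iota => /andP[/eqP Hgp /andP[Hp1 HpL]] ->.
rewrite add1n ltnS in HpL.
have A3 : (gval a b p <= Posz t2)%R by rewrite Hgp lez_nat.
have [q /andP[Hpq HqL] Hgq] := P1 t2 p (introT andP (conj Hp1 HpL)) A3 Ht2.
apply: (@leq_trans (part a q)).
  apply: foldr_min_le; apply: map_f.
  by rewrite mem_filter Hgq eqxx mem_iota (leq_trans Hp1 Hpq) add1n ltnS.
by apply: part_mono => //; rewrite Hp1.
Qed.
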